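(* Let $w\in\mathcal{W}$ with $\lambda_{\min}(\Sigma_w)=\Lambda_w>0$, and let $\hat w$ be a function on $\mathcal{X}$ with $\mathbb{E}[(w(\boldsymbol{X})-\hat w(\boldsymbol{X}))^2]=\epsilon^2<\Lambda_w^2/\mathbb{E}[\|\boldsymbol{X}\|_2^4]$. Then $$\|\boldsymbol{\beta}_{\hat w}-\boldsymbol{\beta}_w\|_2\le\frac{\epsilon\|\Sigma_w\|_2\|\boldsymbol{\beta}_w\|_2}{\Lambda_w-\epsilon\sqrt{\mathbb{E}[\|\boldsymbol{X}\|_2^4]}}\left(\frac{\sqrt{\mathbb{E}[\|\boldsymbol{X}\|_2^4]}}{\|\Sigma_w\|_2}+\frac{\sqrt{\mathbb{E}[\|\boldsymbol{X}Y\|_2^2]}}{\|\mathbb{E}[w(\boldsymbol{X})\boldsymbol{X}Y]\|_2}\right).$$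
   Context: $\boldsymbol{X}\in\mathbb{R}^d$ features and $Y\in\mathbb{R}$ outcome with training distribution $P^{\text{tr}}$; $\mathcal{X}$ is the support of $\boldsymbol{X}$, $\mathbb{E}$ expectation under $P^{\text{tr}}$. $\mathcal{W}=\{w:\mathcal{X}\to\mathbb{R}^+\mid\mathbb{E}[w(\boldsymbol{X})]=1\}$. For a function $u$ on $\mathcal{X}$, $\Sigma_u=\mathbb{E}[u(\boldsymbol{X})\boldsymbol{X}\boldsymbol{X}^T]$ and $\boldsymbol{\beta}_u=\Sigma_u^{-1}\mathbb{E}[u(\boldsymbol{X})\boldsymbol{X}Y]$. $\lambda_{\min}$ is the smallest eigenvalue, $\|\cdot\|_2$ the spectral norm on matrices. *)

(* Defs.v *)
From HB Require Import structures.
From mathcomp Require Import all_boot all_order all_algebra.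
From mathcomp Require Import all_classical all_reals all_analysis.
Set Implicit Arguments. Unset Strict Implicit. Unset Printing Implicit Defensive.
Import Order.TTheory GRing.Theory Num.Theory.
Local Open Scope classical_set_scope.
Local Open Scope ring_scope.

Section Defs.
Context {R : realType} {dm : measure_display} {T : measurableType dm}.

Definition Ex (P : probability T R) (f : T -> R) : R :=
  fine (\int[P]_t (f t)%:E)%E.

Definition Emx (P : probability T R) m n (F : T -> 'M[R]_(m, n)) : 'M[R]_(m, n) :=
  \matrix_(i, j) Ex P (fun t => F t i j).

Definition norm2 d (v : 'cV[R]_d) : R := Num.sqrt (\sum_i (v i 0) ^+ 2).

Definition specnorm d (A : 'M[R]_d) : R :=
  sup [set norm2 (A *m v) | v in [set v : 'cV[R]_d | norm2 v = 1]].

Definition is_lambda_min d (A : 'M[R]_d) (l : R) : Prop :=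
  eigenvalue A l /\ forall a : R, eigenvalue A a -> l <= a.

Definition Sigma (P : probability T R) d (X : T -> 'cV[R]_d) (u : 'cV[R]_d -> R)
  : 'M[R]_d := Emx P (fun t => u (X t) *: (X t *m (X t)^T)).

Definition cross (P : probability T R) d (X : T -> 'cV[R]_d) (Y : T -> R)
  (u : 'cV[R]_d -> R) : 'cV[R]_d := Emx P (fun t => (u (X t) * Y t) *: X t).

Definition beta (P : probability T R) d (X : T -> 'cV[R]_d) (Y : T -> R)
  (u : 'cV[R]_d -> R) : 'cV[R]_d := invmx (Sigma P X u) *m cross P X Y u.

End Defs.

(* Main.v *)
Require Import Defs.
From HB Require Import structures.
From mathcomp Require Import all_boot all_order all_algebra.
From mathcomp Require Import all_classical all_reals all_analysis.
From mathcomp Require Import ring lra.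
From mathcomp Require Import measurable_realfun measurable_fun_approximation lebesgue_integrable lebesgue_Rintegral.
Import Order.TTheory GRing.Theory Num.Theory.
Import numFieldNormedType.Exports.
Local Open Scope classical_set_scope.
Local Open Scope ring_scope.
Set Implicit Arguments. Unset Strict Implicit. Unset Printing Implicit Defensive.


Section LA.
Context {R : realType}.

Lemma quad_disc (a b c : R) : 0 <= c ->
  (forall t, 0 <= a - 2 * t * b + t ^+ 2 * c) -> b ^+ 2 <= a * c.
Proof.
move=> c0 H.
have [ce|cn0] := eqVneq c 0; first rewrite ce in H *.
  have [->|bn0] := eqVneq b 0; first by rewrite expr0n mulr0.
  have e : 2 * ((a + 1) / (2 * b)) * b = a + 1 by field.
  have := H ((a + 1) / (2 * b)); rewrite mulr0 addr0 e; lra.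
have cp : 0 < c by rewrite lt_def cn0.
have e : a - 2 * (b / c) * b + (b / c) ^+ 2 * c = (a * c - b ^+ 2) / c.
  by field.
by have := H (b / c); rewrite e pmulr_lge0 ?invr_gt0 // subr_ge0.
Qed.

Variable d : nat.
Implicit Types (A B : 'M[R]_d) (u v : 'cV[R]_d).

Definition bf A u v : R := (u^T *m A *m v) 0 0.
Definition ip u v : R := \sum_i u i 0 * v i 0.

Lemma bfE A u v : bf A u v = \sum_i \sum_j u i 0 * A i j * v j 0.
Proof.
rewrite /bf mxE (eq_bigr (fun j => \sum_i u i 0 * A i j * v j 0)); last first.
  by move=> j _; rewrite mxE mulr_suml; apply: eq_bigr => i _; rewrite !mxE.
exact: exchange_big.
Qed.

Lemma bf_ip A u v : bf A u v = ip u (A *m v).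
Proof.
rewrite bfE /ip; apply: eq_bigr => i _; rewrite mxE mulr_sumr.
by apply: eq_bigr => j _; rewrite mulrA.
Qed.

Lemma ipC u v : ip u v = ip v u.
Proof. by apply: eq_bigr => i _; rewrite mulrC. Qed.

Lemma ipDr u v1 v2 : ip u (v1 + v2) = ip u v1 + ip u v2.
Proof. by rewrite /ip -big_split; apply: eq_bigr => i _; rewrite mxE mulrDr. Qed.
Lemma ipBr u v1 v2 : ip u (v1 - v2) = ip u v1 - ip u v2.
Proof. rewrite /ip -sumrB; apply: eq_bigr => i _; rewrite !mxE mulrDr mulrN //. Qed.
Lemma ipZr u k v : ip u (k *: v) = k * ip u v.
Proof. by rewrite /ip mulr_sumr; apply: eq_bigr => i _; rewrite mxE mulrCA. Qed.
Lemma ipDl u1 u2 v : ip (u1 + u2) v = ip u1 v + ip u2 v.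
Proof. by rewrite ipC ipDr !(ipC v). Qed.
Lemma ipBl u1 u2 v : ip (u1 - u2) v = ip u1 v - ip u2 v.
Proof. by rewrite ipC ipBr !(ipC v). Qed.
Lemma ipZl k u v : ip (k *: u) v = k * ip u v.
Proof. by rewrite ipC ipZr ipC. Qed.

Lemma ip_ge0 u : 0 <= ip u u.
Proof. by apply: sumr_ge0 => i _; rewrite -expr2 sqr_ge0. Qed.

Lemma ip_eq0 u : ip u u = 0 -> u = 0.
Proof.
move=> /eqP; rewrite psumr_eq0; last by move=> i _; rewrite -expr2 sqr_ge0.
move=> /allP H; apply/matrixP => i j; rewrite (ord1 j) mxE.
by have := H i (mem_index_enum i); rewrite -expr2 sqrf_eq0 => /eqP.
Qed.

Lemma ip_CS u v : ip u v ^+ 2 <= ip u u * ip v v.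
Proof.
apply: quad_disc; first exact: ip_ge0.
move=> t; have := ip_ge0 (u - t *: v).
rewrite ipBl !ipBr !ipZl !ipZr (ipC v u).
by have -> : ip u u - t * ip u v - (t * ip u v - t * (t * ip v v)) =
  ip u u - 2 * t * ip u v + t ^+ 2 * ip v v by ring.
Qed.

Lemma bf_sym A u v : A^T = A -> bf A u v = bf A v u.
Proof.
move=> sA; rewrite !bfE exchange_big; apply: eq_bigr => i _; apply: eq_bigr => j _.
by rewrite -{1}sA mxE; ring.
Qed.

Lemma bfDm A B u v : bf (A + B) u v = bf A u v + bf B u v.
Proof. by rewrite !bf_ip mulmxDl ipDr. Qed.
Lemma bfBm A B u v : bf (A - B) u v = bf A u v - bf B u v.
Proof. by rewrite !bf_ip mulmxBl ipBr. Qed.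
Lemma bf1 u v : bf 1%:M u v = ip u v.
Proof. by rewrite bf_ip mul1mx. Qed.

End LA.


Section EVT.
Context {R : realType} (d : nat).

Lemma cont_sum (I : Type) (s : seq I) (F : I -> 'rV[R]_d -> R) :
  (forall i, continuous (F i)) -> continuous (fun r => \sum_(i <- s) F i r).
Proof.
move=> H; elim: s => [|i s IH].
  under eq_fun do rewrite big_nil; exact: cst_continuous.
under eq_fun do rewrite big_cons.
by move=> x; exact: (continuousD (H i x) (IH x)).
Qed.

Lemma cont_coord i : continuous (fun r : 'rV[R]_d => r 0 i).
Proof. exact: coord_continuous. Qed.

End EVT.

Section EVT2.
Context {R : realType} (d : nat).
Implicit Types (A : 'M[R]_d) (u v : 'cV[R]_d).

Lemma ip0l v : ip 0 v = 0.
Proof. by rewrite /ip big1 // => i _; rewrite mxE mul0r. Qed.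

Lemma ipAsym A u v : A^T = A -> ip u (A *m v) = ip v (A *m u).
Proof. by move=> sA; rewrite -!bf_ip bf_sym. Qed.

Lemma sq_le1 (x : R) : x ^+ 2 <= 1 -> `|x| <= 1.
Proof.
move=> h; have h2 : `|x| ^+ 2 <= 1 by rewrite real_normK ?num_real.
have := normr_ge0 x; nra.
Qed.

Lemma sym_min_eig A L : A^T = A -> is_lambda_min A L ->
  forall v, L * ip v v <= bf A v v.
Proof.
move=> sA [_ Lmin] v.
have [v0|vn0] := eqVneq (ip v v) 0.
  by rewrite v0 mulr0 (ip_eq0 v0) bf_ip ip0l.
pose q (r : 'rV[R]_d) := bf A r^T r^T.
pose nr (r : 'rV[R]_d) := ip r^T r^T.
have qE r : q r = \sum_i \sum_j r 0 i * A i j * r 0 j.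
  by rewrite /q bfE; apply: eq_bigr => i _; apply: eq_bigr => j _; rewrite !mxE.
have nrE r : nr r = \sum_i r 0 i * r 0 i.
  by rewrite /nr /ip; apply: eq_bigr => i _; rewrite !mxE.
have qc : continuous q.
  have -> : q = fun r => \sum_i \sum_j r 0 i * A i j * r 0 j.
    by apply/funext => r; exact: qE.
  apply: cont_sum => i; apply: cont_sum => j => x.
  have h1 := continuousM (@cont_coord R d i x) (@cst_continuous _ _ (A i j) x).
  have h2 := continuousM h1 (@cont_coord R d j x).
  exact: h2.
have nrc : continuous nr.
  have -> : nr = fun r => \sum_i r 0 i * r 0 i.
    by apply/funext => r; exact: nrE.
  apply: cont_sum => i x.
  exact: (continuousM (@cont_coord R d i x) (@cont_coord R d i x)).
pose Sph := [set r : 'rV[R]_d | nr r = 1].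
have nrZ k r : nr (k *: r) = k ^+ 2 * nr r.
  by rewrite /nr linearZ /= ipZl ipZr mulrA expr2.
have qZ k r : q (k *: r) = k ^+ 2 * q r.
  by rewrite /q linearZ /= !bf_ip -scalemxAr ipZl ipZr mulrA expr2.
have ipvp : 0 < ip v v by rewrite lt_def vn0 ip_ge0.
have Sph0 : Sph !=set0.
  exists ((Num.sqrt (ip v v))^-1 *: v^T); rewrite /Sph /= nrZ /nr trmxK.
  by rewrite exprVn sqr_sqrtr ?ip_ge0 // mulVf.
have Sphc : compact Sph.
  apply: bounded_closed_compact; last first.
    apply: (@preimage_closed _ _ nr [set 1]); last exact: closed_eq.
    by move=> x _; exact: nrc.
  rewrite /= /bounded_near; near=> M => r /= Sr.
  rewrite (_ : `|r| = mx_norm r) // mx_normrE.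
  apply: bigmax_le => [|ij _]; first by near: M; apply: nbhs_pinfty_ge; rewrite num_real.
  apply: (@le_trans _ _ 1); last by near: M; apply: nbhs_pinfty_ge; rewrite num_real.
  apply: sq_le1; case: ij => i j /=; rewrite (ord1 i).
  move: Sr; rewrite /Sph /= nrE (bigD1 j) //= => <-.
  rewrite expr2 lerDl; apply: sumr_ge0 => k _; rewrite -expr2 sqr_ge0 //.
have qwc : {within Sph, continuous q} by apply: continuous_subspaceT.
have [c Sc cmin] := EVT_min_rV Sph0 Sphc qwc.
pose m := q c.
have key r : m * nr r <= q r.
  have [r0|rn0] := eqVneq (nr r) 0.
    have -> : r = 0.
      by rewrite -[r]trmxK (ip_eq0 r0) trmx0.
    by rewrite /q /nr trmx0 bf_ip !ip0l mulr0.
  have nrp : 0 < nr r by rewrite lt_def rn0 ip_ge0.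
  pose s := Num.sqrt (nr r).
  have sp : 0 < s by rewrite sqrtr_gt0.
  have s2 : s ^+ 2 = nr r by rewrite sqr_sqrtr // ltW.
  have : m <= q (s^-1 *: r).
    apply: cmin; rewrite inE /Sph /= nrZ exprVn s2 mulVf //.
  rewrite qZ exprVn s2 => h.
  by rewrite -ler_pdivlMr // mulrC.
pose C := c^T.
have nC : ip C C = 1 by move: Sc; rewrite inE.
have keyc U : m * ip U U <= ip U (A *m U).
  by have := key U^T; rewrite /q /nr bf_ip trmxK.
have cross U : ip U (A *m C) - m * ip U C = 0.
  have Hf : 0 <= ip U (A *m U) - m * ip U U by rewrite subr_ge0.
  suff : (- (ip U (A *m C) - m * ip U C)) ^+ 2 <= 0 * (ip U (A *m U) - m * ip U U).
    by rewrite mul0r sqrrN => h; apply/eqP; rewrite -sqrf_eq0 eq_le h sqr_ge0.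
  apply: quad_disc => // t.
  have := keyc (C + t *: U).
  rewrite -subr_ge0 mulmxDr -scalemxAr !ipDl !ipDr !ipZl !ipZr nC.
  rewrite (ipAsym C U sA) (ipC C U) -/m.
  have -> : m = ip C (A *m C) by rewrite /m /q bf_ip.
  move=> h; apply: (le_trans h); rewrite le_eqVlt; apply/orP; left; apply/eqP.
  ring.
have AC : A *m C = m *: C.
  apply/eqP; rewrite -subr_eq0; apply/eqP; apply: ip_eq0.
  by rewrite ipBr ipZr cross.
have cn0 : c != 0.
  apply/eqP => c0; move: nC; rewrite /C c0 trmx0 ip0l => /eqP.
  by rewrite eq_sym oner_eq0.
have eigm : eigenvalue A m.
  apply/eigenvalueP; exists c => //.
  by rewrite -[c *m A]trmxK trmx_mul sA -/C AC linearZ /= trmxK.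
have Lm := Lmin m eigm.
rewrite bf_ip; apply: le_trans (keyc v).
by apply: ler_wpM2r => //; exact: ip_ge0.
Unshelve. all: by end_near.
Qed.

End EVT2.

Section LA2.
Context {R : realType} (d : nat).
Implicit Types (A : 'M[R]_d) (u v : 'cV[R]_d).

Lemma norm2E v : norm2 v = Num.sqrt (ip v v).
Proof. by rewrite /norm2 /ip; congr Num.sqrt; apply: eq_bigr => i _; rewrite expr2. Qed.

Lemma norm2_ge0 v : 0 <= norm2 v.
Proof. by rewrite norm2E sqrtr_ge0. Qed.

Lemma norm2_sq v : norm2 v ^+ 2 = ip v v.
Proof. by rewrite norm2E sqr_sqrtr // ip_ge0. Qed.

Lemma norm2Z k v : norm2 (k *: v) = `|k| * norm2 v.
Proof.
rewrite !norm2E ipZl ipZr mulrA -expr2 sqrtrM ?sqr_ge0 //.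
by rewrite sqrtr_sqr.
Qed.

Lemma ip_abs_le u v : `|ip u v| <= norm2 u * norm2 v.
Proof.
rewrite -(@ler_pXn2r _ 2) ?nnegrE ?mulr_ge0 ?norm2_ge0 //.
by rewrite exprMn !norm2_sq real_normK ?num_real // ip_CS.
Qed.

Lemma ip_le u v : ip u v <= norm2 u * norm2 v.
Proof. exact: le_trans (ler_norm _) (ip_abs_le u v). Qed.

Lemma Aip_le A v : ip (A *m v) (A *m v) <= (\sum_i \sum_j A i j ^+ 2) * ip v v.
Proof.
rewrite {1}/ip mulr_suml; apply: ler_sum => i _.
have -> : (A *m v) i 0 = ip (\col_j A i j) v.
  by rewrite mxE; apply: eq_bigr => j _; rewrite mxE.
have -> : \sum_j A i j ^+ 2 = ip (\col_j A i j) (\col_j A i j).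
  by apply: eq_bigr => j _; rewrite !mxE expr2.
by rewrite -expr2 ip_CS.
Qed.

Lemma specnorm_ub A v : norm2 (A *m v) <= specnorm A * norm2 v.
Proof.
have [v0|vn0] := eqVneq (ip v v) 0.
  by rewrite (ip_eq0 v0) mulmx0 !norm2E ip0l sqrtr0 mulr0.
have vp : 0 < norm2 v.
  by rewrite norm2E sqrtr_gt0 lt_def vn0 ip_ge0.
pose u := (norm2 v)^-1 *: v.
have nu : norm2 u = 1 by rewrite norm2Z ger0_norm ?invr_ge0 ?ltW // mulVf ?gt_eqF.
have ub : norm2 (A *m u) <= specnorm A.
  apply: ub_le_sup; last by exists u.
  exists (Num.sqrt (\sum_i \sum_j A i j ^+ 2)) => _ [x /= nx <-].
  rewrite norm2E ler_sqrt; last by apply: sumr_ge0 => i _; apply: sumr_ge0 => j _; exact: sqr_ge0.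
  by have := Aip_le A x; rewrite -(norm2_sq x) nx expr1n mulr1.
have -> : A *m v = norm2 v *: (A *m u).
  by rewrite /u -scalemxAr scalerA mulfV ?gt_eqF // scale1r.
by rewrite norm2Z (ger0_norm (ltW vp)) mulrC ler_pM2r.
Qed.

Lemma unit_of_pos A k : A^T = A -> 0 < k -> (forall v, k * ip v v <= bf A v v) ->
  A \in unitmx.
Proof.
move=> sA kp H; rewrite -row_free_unit -kermx_eq0; apply/negPn/negP => Kn0.
have [i ri] : exists i, row i (kermx A) != 0.
  case: (pselect (exists i, row i (kermx A) != 0)) => // h; exfalso.
  move/negP: Kn0; apply; apply/eqP/row_matrixP => i; rewrite row0.
  by apply/eqP/negPn/negP => hi; apply: h; exists i.
pose v := (row i (kermx A))^T.
have Av : A *m v = 0.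
  by rewrite -[A *m v]trmxK trmx_mul trmxK sA -row_mul mulmx_ker row0 trmx0.
have := H v; rewrite bf_ip Av ipC ip0l pmulr_rle0 //.
move=> hv; have v0 : ip v v = 0 by apply/eqP; rewrite eq_le hv ip_ge0.
by move: ri; rewrite -[row i _]trmxK -/v (ip_eq0 v0) trmx0 eqxx.
Qed.

End LA2.


Section Prob.
Context {R : realType} {dm : measure_display} {T : measurableType dm}.
Variable P : probability T R.

Definition Int (f : T -> R) := P.-integrable setT (fun t => (f t)%:E).
Definition Mf (f : T -> R) := measurable_fun setT f.

Lemma Int_M f : Int f -> Mf f.
Proof. by move=> /integrableP[/measurable_EFinP]. Qed.

Lemma IntD f g : Int f -> Int g -> Int (fun t => f t + g t).
Proof.
move=> hf hg; have := integrableD measurableT hf hg.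
by apply: (eq_integrable measurableT) => t _.
Qed.

Lemma IntN f : Int f -> Int (fun t => - f t).
Proof. by move=> hf; have := integrableN hf; apply: (eq_integrable measurableT) => t _. Qed.

Lemma IntB f g : Int f -> Int g -> Int (fun t => f t - g t).
Proof. by move=> hf hg; apply: IntD => //; exact: IntN. Qed.

Lemma IntZ k f : Int f -> Int (fun t => k * f t).
Proof. by move=> hf; have := integrableZl measurableT k hf; apply: (eq_integrable measurableT) => t _. Qed.

Lemma Int_ext f g : (forall t, f t = g t) -> Int f -> Int g.
Proof. by move=> e; apply: (eq_integrable measurableT) => t _; rewrite e. Qed.

Lemma Int_dom f g : Mf f -> (forall t, `|f t| <= g t) -> Int g -> Int f.
Proof.
move=> mf h hg; apply: (le_integrable measurableT _ _ hg).
  exact/measurable_EFinP.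
move=> t _ /=; rewrite lee_fin (le_trans (h t)) //.
exact: ler_norm.
Qed.

Lemma Int_sum (I : Type) (s : seq I) (F : I -> T -> R) :
  (forall i, Int (F i)) -> Int (fun t => \sum_(i <- s) F i t).
Proof.
move=> H; elim: s => [|i s IH].
  apply: (@Int_ext (fun=> 0)); first by move=> t; rewrite big_nil.
  have := integrable0 P setT; apply: (eq_integrable measurableT) => t _ //.
apply: (@Int_ext (fun t => F i t + \sum_(j <- s) F j t)).
  by move=> t; rewrite big_cons.
exact: IntD.
Qed.

Lemma ExD f g : Int f -> Int g -> Ex P (fun t => f t + g t) = Ex P f + Ex P g.
Proof. by move=> hf hg; exact: (RintegralD measurableT hf hg). Qed.

Lemma ExB f g : Int f -> Int g -> Ex P (fun t => f t - g t) = Ex P f - Ex P g.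
Proof. by move=> hf hg; exact: (RintegralB measurableT hf hg). Qed.

Lemma ExZ k f : Int f -> Ex P (fun t => k * f t) = k * Ex P f.
Proof. by move=> hf; exact: (RintegralZl k measurableT hf). Qed.

Lemma Ex_ext f g : (forall t, f t = g t) -> Ex P f = Ex P g.
Proof. by move=> e; congr Ex; apply/funext. Qed.

Lemma Ex_le f g : Int f -> Int g -> (forall t, f t <= g t) -> Ex P f <= Ex P g.
Proof. by move=> hf hg h; apply: (le_Rintegral measurableT hf hg) => t _. Qed.

Lemma Ex_ge0 f : (forall t, 0 <= f t) -> 0 <= Ex P f.
Proof. by move=> h; apply: Rintegral_ge0 => t _. Qed.

Lemma Ex_sum (I : Type) (s : seq I) (F : I -> T -> R) :
  (forall i, Int (F i)) -> Ex P (fun t => \sum_(i <- s) F i t) = \sum_(i <- s) Ex P (F i).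
Proof.
move=> H; elim: s => [|i s IH].
  rewrite big_nil (@Ex_ext _ (fun=> 0)); last by move=> t; rewrite big_nil.
  by rewrite /Ex integral0.
rewrite big_cons (@Ex_ext _ (fun t => F i t + \sum_(j <- s) F j t)).
  by rewrite ExD ?IH //; exact: Int_sum.
by move=> t; rewrite big_cons.
Qed.

Lemma CS f g : Mf f -> Mf g -> Int (fun t => f t ^+ 2) -> Int (fun t => g t ^+ 2) ->
  Int (fun t => f t * g t) /\
  (Ex P (fun t => f t * g t)) ^+ 2 <=
     Ex P (fun t => f t ^+ 2) * Ex P (fun t => g t ^+ 2).
Proof.
move=> mf mg hf hg.
have hfg : Int (fun t => f t * g t).
  apply: (Int_dom _ _ (IntD hf hg)).
    exact: measurable_funM.
  move=> t; rewrite normrM.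
  have := sqr_ge0 (`|f t| - `|g t|).
  have e1 : `|f t| ^+ 2 = f t ^+ 2 by rewrite real_normK ?num_real.
  have e2 : `|g t| ^+ 2 = g t ^+ 2 by rewrite real_normK ?num_real.
  have := normr_ge0 (f t); have := normr_ge0 (g t); nra.
split => //.
apply: quad_disc; first by apply: Ex_ge0 => t; exact: sqr_ge0.
move=> tt.
have h1 : Int (fun t => f t ^+ 2 - 2 * tt * (f t * g t)) by apply: IntB => //; exact: IntZ.
have h2 : Int (fun t => tt ^+ 2 * g t ^+ 2) by exact: IntZ.
rewrite -(ExZ _ hfg) -(ExB hf) ?(IntZ _ hfg) // -(ExZ _ hg) -ExD //.
apply: Ex_ge0 => t; have := sqr_ge0 (f t - tt * g t).
by have -> : (f t - tt * g t) ^+ 2 = f t ^+ 2 - 2 * tt * (f t * g t) + tt ^+ 2 * g t ^+ 2 by ring.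
Qed.

End Prob.


Section GB.
Context {R : realType} {dm : measure_display} {T : measurableType dm}.
Variable P : probability T R.

Lemma abs_le_sqrt (x a : R) : 0 <= a -> x ^+ 2 <= a -> `|x| <= Num.sqrt a.
Proof.
move=> a0 h; rewrite -sqrtr_sqr ler_sqrt //.
Qed.

Lemma GB f h B k e : Mf f -> Mf h -> Int P (fun t => f t ^+ 2) ->
  Ex P (fun t => f t ^+ 2) = e ^+ 2 -> 0 <= e -> Int P B -> 0 <= k ->
  (forall t, h t ^+ 2 <= k * B t) ->
  Int P (fun t => f t * h t) /\ `|Ex P (fun t => f t * h t)| <= e * Num.sqrt (k * Ex P B).
Proof.
move=> mf mh if2 Ef2 e0 iB k0 hB.
have ih2 : Int P (fun t => h t ^+ 2).
  apply: (Int_dom _ _ (IntZ k iB)); first exact: measurable_funX.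
  by move=> t; rewrite ger0_norm ?sqr_ge0.
have [ifh cs] := CS mf mh if2 ih2.
split => //.
have EB : Ex P (fun t => h t ^+ 2) <= k * Ex P B.
  by rewrite -ExZ //; apply: Ex_le => //; exact: IntZ.
have kB0 : 0 <= k * Ex P B.
  by apply: le_trans EB; apply: Ex_ge0 => t; exact: sqr_ge0.
have -> : e * Num.sqrt (k * Ex P B) = Num.sqrt (e ^+ 2 * (k * Ex P B)).
  by rewrite (sqrtrM (k * Ex P B) (sqr_ge0 e)) sqrtr_sqr ger0_norm.
apply: abs_le_sqrt; first by rewrite mulr_ge0 ?sqr_ge0.
apply: (le_trans cs); rewrite Ef2; apply: ler_wpM2l => //; exact: sqr_ge0.
Qed.

End GB.


Lemma eqle {R : realType} (a b : R) : a = b -> a <= b.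
Proof. by move->. Qed.

Lemma coord_le {R : realType} d (v : 'cV[R]_d) i : v i 0 ^+ 2 <= ip v v.
Proof.
rewrite /ip (bigD1 i) //= expr2 lerDl; apply: sumr_ge0 => j _.
by rewrite -expr2 sqr_ge0.
Qed.

Lemma SigmaE {R : realType} {dm : measure_display} {T : measurableType dm}
  (P : probability T R) d (X : T -> 'cV[R]_d) u i j :
  Sigma P X u i j = Ex P (fun t => u (X t) * (X t i 0 * X t j 0)).
Proof. by rewrite mxE; apply: Ex_ext => t; rewrite !mxE big_ord1 !mxE. Qed.

Lemma crossE {R : realType} {dm : measure_display} {T : measurableType dm}
  (P : probability T R) d (X : T -> 'cV[R]_d) Y u i :
  cross P X Y u i 0 = Ex P (fun t => u (X t) * Y t * X t i 0).
Proof. by rewrite mxE; apply: Ex_ext => t; rewrite !mxE. Qed.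

Lemma Sigma_sym {R : realType} {dm : measure_display} {T : measurableType dm}
  (P : probability T R) d (X : T -> 'cV[R]_d) u :
  (Sigma P X u)^T = Sigma P X u.
Proof.
apply/matrixP => i j; rewrite mxE !SigmaE; apply: Ex_ext => t; ring.
Qed.

Lemma Mf_ip {R : realType} {dm : measure_display} {T : measurableType dm}
  d (X : T -> 'cV[R]_d) (u : 'cV[R]_d) :
  (forall i, measurable_fun setT (fun t => X t i 0)) ->
  Mf (fun t => ip u (X t)).
Proof.
move=> mX; apply: measurable_sum => i.
exact: measurable_funM (measurable_cst _) (mX i).
Qed.

Unset Implicit Arguments. Set Strict Implicit. Set Printing Implicit Defensive.

Theorem proposition4 (R : realType) (dm : measure_display) (T : measurableType dm)
  (P : probability T R) (d : nat) (X : T -> 'cV[R]_d) (Y : T -> R)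
  (w what : 'cV[R]_d -> R) (Lam eps : R) :
  (* measurability of the data *)
  (forall i, measurable_fun setT (fun t => X t i 0)) ->
  measurable_fun setT Y ->
  measurable_fun setT (fun t => w (X t)) ->
  measurable_fun setT (fun t => what (X t)) ->
  (* finiteness of the moments appearing in the statement *)
  P.-integrable setT (fun t => (norm2 (X t) ^+ 4)%:E) ->
  P.-integrable setT (fun t => (norm2 (Y t *: X t) ^+ 2)%:E) ->
  (forall i j, P.-integrable setT (fun t => (w (X t) * (X t i 0 * X t j 0))%:E)) ->
  (forall i, P.-integrable setT (fun t => (w (X t) * Y t * X t i 0)%:E)) ->
  P.-integrable setT (fun t => ((w (X t) - what (X t)) ^+ 2)%:E) ->
  (* w \in W *)
  (forall t, 0 < w (X t)) ->
  P.-integrable setT (fun t => (w (X t))%:E) ->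
  Ex P (fun t => w (X t)) = 1 ->
  (* lambda_min(Sigma_w) = Lam > 0 *)
  is_lambda_min (Sigma P X w) Lam -> 0 < Lam ->
  (* E[w(X) X Y] <> 0, so that the right-hand side is well defined *)
  cross P X Y w != 0 ->
  (* E[(w - what)^2] = eps^2 < Lam^2 / E||X||^4 *)
  0 <= eps ->
  Ex P (fun t => (w (X t) - what (X t)) ^+ 2) = eps ^+ 2 ->
  eps ^+ 2 < Lam ^+ 2 / Ex P (fun t => norm2 (X t) ^+ 4) ->
  norm2 (beta P X Y what - beta P X Y w) <=
    eps * specnorm (Sigma P X w) * norm2 (beta P X Y w)
      / (Lam - eps * Num.sqrt (Ex P (fun t => norm2 (X t) ^+ 4)))
    * (Num.sqrt (Ex P (fun t => norm2 (X t) ^+ 4)) / specnorm (Sigma P X w)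
       + Num.sqrt (Ex P (fun t => norm2 (Y t *: X t) ^+ 2))
         / norm2 (cross P X Y w)).
Proof.
move=> mX mY mw mwh i4 iYX iwXX iwYX iwd wpos iw Ew1 lam Lp cn0 e0 Ee eps_lt.
set K4 := Ex P (fun t => norm2 (X t) ^+ 4).
set N2 := Ex P (fun t => norm2 (Y t *: X t) ^+ 2).
pose g t := what (X t) - w (X t).
have mg : Mf g by exact: measurable_funB.
have ig2 : Int P (fun t => g t ^+ 2).
  by apply: (Int_ext _ iwd) => t; rewrite /g -sqrrN opprB.
have Eg2 : Ex P (fun t => g t ^+ 2) = eps ^+ 2.
  by rewrite -Ee; apply: Ex_ext => t; rewrite /g -sqrrN opprB.
have norm4 t : norm2 (X t) ^+ 4 = ip (X t) (X t) ^+ 2.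
  by rewrite -norm2_sq -exprM.
have nYX t : norm2 (Y t *: X t) ^+ 2 = Y t ^+ 2 * ip (X t) (X t).
  by rewrite norm2_sq ipZl ipZr mulrA expr2.
have i4' : Int P (fun t => norm2 (X t) ^+ 4) by [].
have iYX' : Int P (fun t => norm2 (Y t *: X t) ^+ 2) by [].
have gXX i j : Int P (fun t => g t * (X t i 0 * X t j 0)).
  have [] := GB mg (measurable_funM (mX i) (mX j)) ig2 Eg2 e0 i4' (@ler01 R) => //.
  move=> t; rewrite mul1r norm4 exprMn.
  apply: ler_pM; rewrite ?sqr_ge0 ?coord_le //.
have gYX i : Int P (fun t => g t * (Y t * X t i 0)).
  have [] := GB mg (measurable_funM mY (mX i)) ig2 Eg2 e0 iYX' (@ler01 R) => //.
  move=> t; rewrite mul1r nYX exprMn.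
  apply: ler_wpM2l; rewrite ?sqr_ge0 ?coord_le //.
have iwhXX i j : Int P (fun t => what (X t) * (X t i 0 * X t j 0)).
  apply: (Int_ext _ (IntD (gXX i j) (iwXX i j))) => t; rewrite /g; ring.
have iwhYX i : Int P (fun t => what (X t) * Y t * X t i 0).
  apply: (Int_ext _ (IntD (gYX i) (iwYX i))) => t; rewrite /g; ring.
set S := Sigma P X w.
set Sh := Sigma P X what.
set c := cross P X Y w.
set ch := cross P X Y what.
have DE i j : (Sh - S) i j = Ex P (fun t => g t * (X t i 0 * X t j 0)).
  have -> : (Sh - S) i j = Sh i j - S i j by rewrite !mxE.
  rewrite !SigmaE -ExB; [apply: Ex_ext => t; rewrite /g; ring | exact: iwhXX | exact: iwXX].
have eE i : (ch - c) i 0 = Ex P (fun t => g t * (Y t * X t i 0)).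
  have -> : (ch - c) i 0 = ch i 0 - c i 0 by rewrite !mxE.
  rewrite !crossE -ExB; [apply: Ex_ext => t; rewrite /g; ring | exact: iwhYX | exact: iwYX].
have F1 u v : bf (Sh - S) u v = Ex P (fun t => g t * (ip u (X t) * ip v (X t))).
  have term i j : u i 0 * (Sh - S) i j * v j 0 =
      Ex P (fun t => u i 0 * v j 0 * (g t * (X t i 0 * X t j 0))).
    by rewrite DE ExZ ?gXX //; ring.
  rewrite bfE (eq_bigr (fun i => Ex P (fun t => \sum_j
      u i 0 * v j 0 * (g t * (X t i 0 * X t j 0))))); last first.
    move=> i _; rewrite Ex_sum; last by move=> j; apply: IntZ.
    by apply: eq_bigr => j _; exact: term.
  rewrite -Ex_sum; last by move=> i; apply: Int_sum => j; apply: IntZ.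
  apply: Ex_ext => t; rewrite /ip mulr_suml mulr_sumr; apply: eq_bigr => i _.
  rewrite mulr_sumr mulr_sumr; apply: eq_bigr => j _; ring.
have F2 u : ip u (ch - c) = Ex P (fun t => g t * (Y t * ip u (X t))).
  rewrite /ip (eq_bigr (fun i => Ex P (fun t => u i 0 * (g t * (Y t * X t i 0))))); last first.
    by move=> i _; rewrite eE ExZ.
  rewrite -Ex_sum; last by move=> i; apply: IntZ.
  apply: Ex_ext => t; rewrite mulr_sumr mulr_sumr; apply: eq_bigr => i _; ring.
set M := Num.sqrt K4.
set N := Num.sqrt N2.
have B1 u v : `|bf (Sh - S) u v| <= eps * (norm2 u * norm2 v * M).
  rewrite F1.
  have hb t : (ip u (X t) * ip v (X t)) ^+ 2 <= ip u u * ip v v * norm2 (X t) ^+ 4.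
    rewrite norm4 exprMn.
    apply: (le_trans (ler_pM (sqr_ge0 _) (sqr_ge0 _) (ip_CS u (X t)) (ip_CS v (X t)))).
    by apply: eqle; ring.
  have [_ hle] := GB mg (measurable_funM (Mf_ip u mX) (Mf_ip v mX)) ig2 Eg2 e0 i4'
     (mulr_ge0 (ip_ge0 u) (ip_ge0 v)) hb.
  apply: (le_trans hle); apply: eqle.
  by rewrite /M sqrtrM ?mulr_ge0 ?ip_ge0 // sqrtrM ?ip_ge0 // -!norm2E.
have B2 u : `|ip u (ch - c)| <= eps * (norm2 u * N).
  rewrite F2.
  have hb t : (Y t * ip u (X t)) ^+ 2 <= ip u u * norm2 (Y t *: X t) ^+ 2.
    have e1 : (Y t * ip u (X t)) ^+ 2 = Y t ^+ 2 * ip u (X t) ^+ 2 by ring.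
    have e2 : ip u u * (Y t ^+ 2 * ip (X t) (X t)) =
      Y t ^+ 2 * (ip u u * ip (X t) (X t)) by ring.
    rewrite nYX e1 e2.
    exact: (ler_wpM2l (sqr_ge0 (Y t)) (ip_CS u (X t))).
  have [_ hle] := GB mg (measurable_funM mY (Mf_ip u mX)) ig2 Eg2 e0 iYX' (ip_ge0 u) hb.
  apply: (le_trans hle); apply: eqle.
  by rewrite /N sqrtrM ?ip_ge0 // -!norm2E.
have K4ge0 : 0 <= K4 by apply: Ex_ge0 => t; rewrite exprn_ge0 // norm2_ge0.
have K4gt0 : 0 < K4.
  rewrite lt_def K4ge0 andbT; apply/eqP => K0; move: eps_lt.
  by rewrite -/K4 K0 invr0 mulr0 ltNge sqr_ge0.
have M0 : 0 <= M by exact: sqrtr_ge0.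
have N0 : 0 <= N by exact: sqrtr_ge0.
have eM2 : (eps * M) ^+ 2 < Lam ^+ 2.
  by rewrite exprMn sqr_sqrtr // -ltr_pdivlMr.
have eM0 : 0 <= eps * M by exact: mulr_ge0.
have DLp : 0 < Lam - eps * M.
  by rewrite subr_gt0 -(@ltr_pXn2r _ 2%N) // nnegrE ltW.
set Dl := Lam - eps * M.
have sS : S^T = S by exact: Sigma_sym.
have sSh : Sh^T = Sh by exact: Sigma_sym.
have lowS := sym_min_eig sS lam.
have lowSh v : Dl * ip v v <= bf Sh v v.
  have -> : Sh = S + (Sh - S) by rewrite addrC subrK.
  rewrite bfDm; have := B1 v v; rewrite -expr2 norm2_sq ler_norml => /andP[h _].
  have e : Dl * ip v v = Lam * ip v v - eps * (ip v v * M) by rewrite /Dl; ring.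
  have := lowS v; rewrite e; lra.
have uS : S \in unitmx.
  apply: (unit_of_pos sS Lp) => v; exact: lowS.
have uSh : Sh \in unitmx by exact: (unit_of_pos sSh DLp).
set be := beta P X Y w.
set beh := beta P X Y what.
have Sbe : S *m be = c by rewrite /be /beta -/S -/c mulmxA mulmxV // mul1mx.
have Sbeh : Sh *m beh = ch by rewrite /beh /beta -/Sh -/ch mulmxA mulmxV // mul1mx.
set De := beh - be.
have ShDe : Sh *m De = (ch - c) - (Sh - S) *m be.
  by rewrite /De mulmxBr mulmxBl Sbeh Sbe opprB addrA subrK.
have key : Dl * norm2 De ^+ 2 <= eps * norm2 De * (N + norm2 be * M).
  rewrite norm2_sq; apply: (le_trans (lowSh De)).
  rewrite bf_ip ShDe ipBr -bf_ip.
  have h1 := B2 De; have h2 := B1 De be.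
  have a1 := le_trans (ler_norm _) h1.
  have a2 : - bf (Sh - S) De be <= eps * (norm2 De * norm2 be * M).
    by apply: le_trans (ler_norm _) _; rewrite normrN.
  have -> : eps * norm2 De * (N + norm2 be * M) =
    eps * (norm2 De * N) + eps * (norm2 De * norm2 be * M) by ring.
  lra.
have nDe0 := norm2_ge0 De.
have nbe0 := norm2_ge0 be.
have eQ0 : 0 <= eps * (N + norm2 be * M).
  by apply: mulr_ge0 => //; apply: addr_ge0 => //; exact: mulr_ge0.
have step1 : Dl * norm2 De <= eps * (N + norm2 be * M).
  have [n0|nn0] := eqVneq (norm2 De) 0; first by rewrite n0 mulr0.
  have np : 0 < norm2 De by rewrite lt_def nn0.
  rewrite -(ler_pM2r np).
  have -> : Dl * norm2 De * norm2 De = Dl * norm2 De ^+ 2 by ring.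
  have -> : eps * (N + norm2 be * M) * norm2 De = eps * norm2 De * (N + norm2 be * M) by ring.
  exact: key.
have ncp : 0 < norm2 c.
  rewrite norm2E sqrtr_gt0 lt_def ip_ge0 andbT; apply/eqP => /ip_eq0 c0.
  by move: cn0; rewrite -/c c0 eqxx.
set SN := specnorm S.
have cle : norm2 c <= SN * norm2 be by rewrite -Sbe; exact: specnorm_ub.
have SNbe : 0 < SN * norm2 be by exact: lt_le_trans ncp cle.
have SNp : 0 < SN by move: SNbe nbe0; nra.
set r := SN * norm2 be / norm2 c.
have r1 : 1 <= r by rewrite /r ler_pdivlMr // mul1r.
have -> : eps * SN * norm2 be / Dl * (M / SN + N / norm2 c) =
    eps / Dl * (M * norm2 be + N * r).
  rewrite /r; field.
  by rewrite !gt_eqF.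
have h3 : norm2 De <= eps * (N + norm2 be * M) / Dl.
  by rewrite ler_pdivlMr // mulrC.
apply: (le_trans h3).
have -> : eps / Dl * (M * norm2 be + N * r) = eps * (M * norm2 be + N * r) / Dl.
  by rewrite mulrAC.
rewrite ler_pM2r ?invr_gt0 //.
apply: ler_wpM2l => //.
move: N0 r1; nra.
Qed.
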